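(* Suppose Assumptions 1 and 2 hold, $J_0\ne\emptyset$, $0<\delta<1$, and Condition (L) holds for all $j=1,\dots,q$ with a constant $c'\in(0,1)$ satisfying Condition (C). Let $J\subseteq\{1,\dots,q\}$ with $|J|\le q^*$ and $J_0\setminus J\ne\emptyset$, and let $l=|J_0\setminus J|$. On the event $\mathcal E_{\delta,J\cup J_0}\cap\mathcal A$, $$\|\hat\Pi_{J_0}f\|_n^2-\|\hat\Pi_Jf\|_n^2\ge\frac12\frac{(1-\delta)^2}{1+\delta}(1-\rho_{q^*}^2)\kappa_l.$$
   Context: Let $q\ge1$ and let $(Y,X)$ be a pair of random variables with $X=(X_1,\dots,X_q)^T$, each $X_j$ real-valued, and $Y=\sum_{j=1}^q f_j(X_j)+\epsilon$, where $f_j\in L^2(\mathbb P^{X_j})$, $\mathbb E[f_j(X_j)]=0$ for $j=1,\dots,q-1$, and $\epsilon$ is a centered Gaussian variable with variance $\sigma^2$, independent of $X$. Write $f(x)=\sum_{j=1}^qf_j(x_j)$. The space $L^2(\mathbb P^X)$ carries the inner product $\langle g,h\rangle=\mathbb E[g(X)h(X)]$ and norm $\|g\|=\langle g,g\rangle^{1/2}$. Let $H_q=L^2(\mathbb P^{X_q})$ and $H_j=\{h\in L^2(\mathbb P^{X_j}):\mathbb E[h(X_j)]=0\}$ for $j<q$, viewed as subspaces of $L^2(\mathbb P^X)$ via $x\mapsto h(x_j)$; for $J\subseteq\{1,\dots,q\}$ let $H_J=\sum_{j\in J}H_j$ (with $H_\emptyset=\{0\}$). Let $J_0=\{j:\|f_j\|>0\}$,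 $s=|J_0|$, and let $q^*$ be an integer with $s\le q^*$. Let $\rho_{q^*}$ be the supremum of $\langle h_1,h_2\rangle/(\|h_1\|\|h_2\|)$ over all nonzero $h_1\in H_{J_1}$, $h_2\in H_{J_2}$ and all $J_1,J_2\subseteq\{1,\dots,q\}$ with $J_1\cap J_2=\emptyset$ and $|J_1|,|J_2|\le q^*$. Assumption 1 is the condition $\rho_{q^*}<1$. $\kappa=\min_{\emptyset\neq J\subseteq J_0}\|\sum_{j\in J}f_j\|^2$ and, for $1\le l\le s$, $\kappa_l=\min_{J'\subseteq J_0,|J'|=l}\|\sum_{j\in J'}f_j\|^2$. $\epsilon'_{q^*}$ is a positive number such that $\|\sum_{j\in J}g_j\|^2\le(1+\epsilon'_{q^*})\sum_{j\in J}\|g_j\|^2$ for all $J$ with $|J|\le q^*$ and all $g_j\in H_j$. Assumption 2: each $X_j$ takes values in $[0,1]$ and has a density $p_j$ with respect to Lebesgue measure with $c\le p_j\le 1/c$ for a constant $c>0$, and $f_j\in\tilde W_j(\alpha_j,K_j)=\{\sum_{k\ge1}\theta_k\phi_k:\sum_{k\ge1}(2\pi k)^{2\alpha_j}(\theta_{2k}^2+\theta_{2k+1}^2)\le K_j^2\}$ with $\alpha_j>1/2$, $K_j>0$, where $\phi_1=1$, $\phi_{2k}(x)=\sqrt2\cos(2\pi kx)$, $\phi_{2k+1}(x)=\sqrt2\sin(2\pi kx)$, $k\ge1$, on $[0,1]$. Given integers $m_j\ge1$, $V_j$ is the intersection of $H_j$ with the linear span of $\phi_1(x_j),\dots,\phi_{m_j}(x_j)$;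 $V_J=\sum_{j\in J}V_j$, $d_J=\dim V_J$, $d_l=\max_{|J|=l}d_J$; $\Pi_{V_j}$ is the orthogonal projection of $L^2(\mathbb P^X)$ onto $V_j$. $C_j>0$ denotes a constant depending only on $\alpha_j$ and $c$ such that $\|h-\Pi_{V_j}h\|^2\le C_jK_j^2m_j^{-2\alpha_j}$ and $\|h-\Pi_{V_j}h\|_\infty^2\le C_jK_j^2m_j^{1-2\alpha_j}$ for all $h\in\tilde W_j(\alpha_j,K_j)\cap H_j$ and all $m_j\ge1$. Condition (L): $m_j\ge\big(C_jK_j^2q^*(1+\epsilon'_{q^*})/(c'(1-\rho_{q^*}^2)\kappa)\big)^{1/(2\alpha_j)}$, where $c'\in(0,1)$ is a constant. Condition (C): $\frac23(1-\sqrt{c'})^2-8\frac{1+\delta}{(1-\delta)^2}c'\ge\frac12$. $X^1,\dots,X^n$ are independent copies of $X$. The empirical norm is $\|h\|_n^2=\frac1n\sum_{i=1}^nh(X^i)^2$ for functions and $\|u\|_n^2=\frac1n\|u\|_2^2$ for $u\in\mathbb R^n$. $\hat\Pi_J$ is the orthogonal projection of $\mathbb R^n$ onto $\{(g(X^1),\dots,g(X^n))^T:g\in V_J\}$, and for a function $h$ we write $\hat\Pi_Jh=\hat\Pi_J(h(X^1),\dots,h(X^n))^T$. For $0<\delta<1$ and $J\subseteq\{1,\dots,q\}$, $\mathcal E_{\delta,J}$ is the event that $(1-\delta)\|g\|^2\le\|g\|_n^2\le(1+\delta)\|g\|^2$ for all $g\in V_J$. $\mathcal A=\{\|f-\sum_{j\in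 J_0}\Pi_{V_j}f_j\|_n^2\le2c'(1-\rho_{q^*}^2)\kappa\}$. *)

(* Defs.v *)
From HB Require Import structures.
From mathcomp Require Import all_boot all_order all_algebra.
From mathcomp Require Import all_classical all_reals all_analysis.
Set Implicit Arguments. Unset Strict Implicit. Unset Printing Implicit Defensive.
Import Order.TTheory GRing.Theory Num.Theory.
Import numFieldNormedType.Exports.
Local Open Scope ring_scope.

(* Trigonometric basis on [0,1]:  phi 1 = 1, phi (2k) = sqrt 2 cos(2 pi k x),
   phi (2k+1) = sqrt 2 sin (2 pi k x) (k >= 1).  phi 0 is a dummy (= 0). *)
Definition phi {R : realType} (k : nat) (x : R) : R :=
  if k == 0%N then 0
  else if k == 1%N then 1
  else if ~~ odd k then Num.sqrt 2 * cos (2 * pi * (k./2)%:R * x)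
  else Num.sqrt 2 * sin (2 * pi * (k./2)%:R * x).

Definition Wtilde {R : realType} (alpha K : R) (h : R -> R) : Prop :=
  exists theta : nat -> R,
    (forall x : R, 0 <= x <= 1 ->
        (series (fun k => theta k * phi k x) @ \oo --> h x)%classic) /\
    (\sum_(1 <= k <oo)
        (((2 * pi * k%:R) `^ (2 * alpha) *
          (theta (k.*2)%N ^+ 2 + theta (k.*2).+1 ^+ 2))%:E) <= (K ^+ 2)%:E)%E.

Definition I01 {R : realType} : set R := [set x : R | (0 <= x <= 1)%R]%classic.

Section Model.
Context {R : realType} {d : measure_display} {Omega : measurableType d}.
Variable (P : probability Omega R) (q : nat) (X : 'I_q -> Omega -> R).

Definition Xv (w : Omega) : 'I_q -> R := fun j => X j w.

Definition ipX (G H : ('I_q -> R) -> R) : R :=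
  fine (\int[P]_w ((G (Xv w) * H (Xv w))%:E)).
Definition sqn (G : ('I_q -> R) -> R) : R := ipX G G.
Definition nrm (G : ('I_q -> R) -> R) : R := Num.sqrt (sqn G).

Definition liftj (j : 'I_q) (h : R -> R) : ('I_q -> R) -> R := fun x => h (x j).
Definition fsum (h : 'I_q -> R -> R) (J : {set 'I_q}) : ('I_q -> R) -> R :=
  fun x => \sum_(j in J) h j (x j).

(* H_j : L^2(P^{X_j}), centered when j is not the last index (0-based: j+1 < q) *)
Definition inH (j : 'I_q) (h : R -> R) : Prop :=
  measurable_fun [set: R]%classic h /\
  (\int[P]_w (((h (X j w)) ^+ 2)%:E) < +oo)%E /\
  ((j.+1 < q)%N -> fine (\int[P]_w ((h (X j w))%:E)) = 0).

Definition inHJ (J : {set 'I_q}) (G : ('I_q -> R) -> R) : Prop :=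
  exists h : 'I_q -> R -> R, (forall j, j \in J -> inH j (h j)) /\ G = fsum h J.

Definition corr_set (qs : nat) : set R :=
  fun r : R => exists J1 J2 : {set 'I_q}, [disjoint J1 & J2] /\
     (#|J1| <= qs)%N /\ (#|J2| <= qs)%N /\
     exists G1 G2, inHJ J1 G1 /\ inHJ J2 G2 /\ 0 < sqn G1 /\ 0 < sqn G2 /\
       r = ipX G1 G2 / (nrm G1 * nrm G2).

Definition rho (qs : nat) : R := sup (corr_set qs).

Definition J0 (f : 'I_q -> R -> R) : {set 'I_q} := [set j | 0 < sqn (liftj j (f j))]%SET.

Definition kappa (f : 'I_q -> R -> R) : R :=
  inf [set sqn (fsum f J) | J in [set J : {set 'I_q} | J \subset J0 f /\ J != finset.set0]%classic]%classic.
Definition kappa_l (f : 'I_q -> R -> R) (l : nat) : R :=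
  inf [set sqn (fsum f J) | J in [set J : {set 'I_q} | J \subset J0 f /\ #|J| = l]%classic]%classic.

Definition inV (j : 'I_q) (m : nat) (g : R -> R) : Prop :=
  inH j g /\
  exists a : nat -> R, forall x, g x = \sum_(1 <= k < m.+1) a k * phi k x.

Definition inVJ (m : 'I_q -> nat) (J : {set 'I_q}) (G : ('I_q -> R) -> R) : Prop :=
  exists g : 'I_q -> R -> R, (forall j, j \in J -> inV j (m j) (g j)) /\ G = fsum g J.

Definition is_projV (j : 'I_q) (m : nat) (h g : R -> R) : Prop :=
  inV j m g /\
  forall v, inV j m v -> fine (\int[P]_w (((h (X j w) - g (X j w)) * v (X j w))%:E)) = 0.

Section Sample.
Variables (n : nat) (xs : 'I_n -> 'I_q -> R).

Definition esqn (G : ('I_q -> R) -> R) : R := n%:R^-1 * \sum_(i < n) (G (xs i)) ^+ 2.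
Definition vsqn (u : 'I_n -> R) : R := n%:R^-1 * \sum_(i < n) (u i) ^+ 2.

Definition eventE (delta : R) (m : 'I_q -> nat) (J : {set 'I_q}) : Prop :=
  forall G, inVJ m J G -> (1 - delta) * sqn G <= esqn G /\ esqn G <= (1 + delta) * sqn G.

Definition SJ (m : 'I_q -> nat) (J : {set 'I_q}) : set ('I_n -> R) :=
  [set u | exists G, inVJ m J G /\ forall i, u i = G (xs i)]%classic.

Definition is_eproj (S : set ('I_n -> R)) (y u : 'I_n -> R) : Prop :=
  S u /\ forall v, S v -> \sum_(i < n) (y i - u i) * v i = 0.

End Sample.
End Model.

(* Main.v *)
Require Import Defs.
From HB Require Import structures.
From mathcomp Require Import all_boot all_order all_algebra.
From mathcomp Require Import all_classical all_reals all_analysis.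
From mathcomp Require Import ring lra measurable_realfun lebesgue_Rintegral.
Import Order.TTheory GRing.Theory Num.Theory.
Import numFieldNormedType.Exports.
Local Open Scope ring_scope.
Section L2.
Context {R : realType} {d : measure_display} {Omega : measurableType d}.
Variable (P : probability Omega R).

Definition L2 (f : Omega -> R) :=
  measurable_fun [set: Omega]%classic f /\
  P.-integrable [set: Omega]%classic (EFin \o (fun w => f w * f w)).

Lemma int_scale (f : Omega -> R) k :
  P.-integrable [set: Omega]%classic (EFin \o f) ->
  P.-integrable [set: Omega]%classic (EFin \o (fun w => k * f w)).
Proof.
move=> h; apply: (eq_integrable _ _ _ _ (integrableZl _ k h)) => //= x _; rewrite EFinM.
Qed.

Lemma int_add (f g : Omega -> R) :
  P.-integrable [set: Omega]%classic (EFin \o f) ->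
  P.-integrable [set: Omega]%classic (EFin \o g) ->
  P.-integrable [set: Omega]%classic (EFin \o (fun w => f w + g w)).
Proof.
move=> hf hg; exact: (eq_integrable _ _ _ _ (integrableD _ hf hg)).
Qed.

Lemma L2_mul f g : L2 f -> L2 g ->
  P.-integrable [set: Omega]%classic (EFin \o (fun w => f w * g w)).
Proof.
move=> [mf If] [mg Ig].
have := int_add _ _ If Ig => H.
eapply (le_integrable measurableT _ _ H).
Unshelve. 2: { move=> x _ /=.
have h1 : 0 <= f x * f x + g x * g x by rewrite addr_ge0 // -expr2 sqr_ge0.
rewrite lee_fin (ger0_norm h1).
have := sqr_ge0 (f x - g x); have := sqr_ge0 (f x + g x).
case: (lerP 0 (f x * g x)) => h.
  by rewrite ger0_norm //; nra.
by rewrite ltr0_norm //; nra. }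
by apply/measurable_EFinP; apply: measurable_funM.
Qed.

Lemma L2_int f : L2 f -> P.-integrable [set: Omega]%classic (EFin \o f).
Proof.
move=> [mf If].
have H := int_add _ _ (finite_measure_integrable_cst P 1 measurableT) If.
eapply (le_integrable measurableT _ _ H).
Unshelve. 2: { move=> x _ /=.
have h1 : 0 <= 1 + f x * f x by rewrite addr_ge0 // -expr2 sqr_ge0.
rewrite lee_fin (ger0_norm h1).
have := sqr_ge0 (f x - 1); have := sqr_ge0 (f x + 1).
case: (lerP 0 (f x)) => h.
  by rewrite ger0_norm //; nra.
by rewrite ltr0_norm //; nra. }
by apply/measurable_EFinP.
Qed.

Lemma L2_lin f g a b : L2 f -> L2 g -> L2 (fun w => a * f w + b * g w).
Proof.
move=> Lf Lg; have Ifg := L2_mul _ _ Lf Lg.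
case: Lf => mf If; case: Lg => mg Ig; split.
  by apply: measurable_funD; apply: measurable_funM.
have H := int_add _ _ (int_scale _ (a * a) If)
  (int_add _ _ (int_scale _ (2 * a * b) Ifg) (int_scale _ (b * b) Ig)).
apply: (eq_integrable _ _ _ _ H) => //= x _; congr EFin; ring.
Qed.

Lemma L2_expand f g a b : L2 f -> L2 g ->
  \int[P]_w ((a * f w + b * g w) * (a * f w + b * g w)) =
  a * a * \int[P]_w (f w * f w) + 2 * a * b * \int[P]_w (f w * g w)
  + b * b * \int[P]_w (g w * g w).
Proof.
move=> Lf Lg; have Ifg := L2_mul _ _ Lf Lg.
case: Lf => mf If; case: Lg => mg Ig.
rewrite (@eq_Rintegral _ _ _ P _ (fun w => a * a * (f w * f w) +
   (2 * a * b * (f w * g w) + b * b * (g w * g w)))); last first.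
  by move=> x _; ring.
rewrite RintegralD //; last first.
  by apply: (int_add _ _); apply: (int_scale _).
  by apply: (int_scale _).
rewrite RintegralD //; try by apply: (int_scale _).
by rewrite !RintegralZl // addrA.
Qed.

Lemma Rint_sq_ge0 f : 0 <= \int[P]_w (f w * f w).
Proof. by apply: Rintegral_ge0 => x _; rewrite -expr2 sqr_ge0. Qed.

Lemma L2_CS f g : L2 f -> L2 g ->
  (\int[P]_w (f w * g w)) ^+ 2 <= \int[P]_w (f w * f w) * \int[P]_w (g w * g w).
Proof.
move=> Lf Lg.
set A := \int[P]_w (f w * f w); set B := \int[P]_w (g w * g w);
set C := \int[P]_w (f w * g w).
have key t : 0 <= A - 2 * t * C + t * t * B.
  have := Rint_sq_ge0 (fun w => 1 * f w + (- t) * g w).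
  by rewrite L2_expand // -/A -/B -/C; nra.
have A0 : 0 <= A by apply: Rint_sq_ge0.
have B0 : 0 <= B by apply: Rint_sq_ge0.
have [B0'|Bp] := eqVneq B 0.
  have [C0|Cn] := eqVneq C 0; first by rewrite C0 expr0n /= mulr_ge0.
  have := key ((A + 1) / (2 * C)); rewrite B0' mulr0 addr0.
  have -> : 2 * ((A + 1) / (2 * C)) * C = A + 1 by field.
  move=> h; exfalso; lra.
have Bp' : 0 < B by rewrite lt_def Bp B0.
have := key (C / B).
have -> : A - 2 * (C / B) * C + C / B * (C / B) * B = A - C * C / B.
  by field; rewrite gt_eqF.
rewrite subr_ge0 ler_pdivrMr // expr2 //.
Qed.

Lemma L2P f : L2 f <-> measurable_fun [set: Omega]%classic f /\
  (\int[P]_w ((f w ^+ 2)%:E) < +oo)%E.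
Proof.
split=> [[mf /integrableP [_ H]]|[mf H]].
  split => //; apply: le_lt_trans H; rewrite le_eqVlt; apply/orP; left.
  apply/eqP; apply: eq_integral => x _ /=.
  by rewrite -expr2 ger0_norm // sqr_ge0.
split => //; apply/integrableP; split.
  by apply/measurable_EFinP; apply: measurable_funM.
apply: le_lt_trans H; rewrite le_eqVlt; apply/orP; left.
apply/eqP; apply: eq_integral => x _ /=.
by rewrite -expr2 ger0_norm // sqr_ge0.
Qed.
End L2.

Section Model2.
Context {R : realType} {d : measure_display} {Omega : measurableType d}.
Variable (P : probability Omega R) (q : nat) (X : 'I_q -> Omega -> R).
Hypothesis mX : forall j, measurable_fun [set: Omega]%classic (X j).

Definition SIG (G : ('I_q -> R) -> R) := L2 P (fun w => G (Xv X w)).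

Lemma ipXE G H : ipX P X G H = \int[P]_w (G (Xv X w) * H (Xv X w)).
Proof. by []. Qed.

Lemma sqn_ge0 G : 0 <= sqn P X G.
Proof. exact: Rint_sq_ge0. Qed.

Lemma sqn_comb G1 G2 a b : SIG G1 -> SIG G2 ->
  sqn P X (fun x => a * G1 x + b * G2 x) =
  a * a * sqn P X G1 + 2 * a * b * ipX P X G1 G2 + b * b * sqn P X G2.
Proof. by move=> h1 h2; rewrite /sqn !ipXE L2_expand. Qed.

Lemma CS_G G1 G2 : SIG G1 -> SIG G2 ->
  ipX P X G1 G2 ^+ 2 <= sqn P X G1 * sqn P X G2.
Proof. by move=> h1 h2; rewrite /sqn !ipXE; apply: L2_CS. Qed.

Lemma SIG_lin G1 G2 a b : SIG G1 -> SIG G2 -> SIG (fun x => a * G1 x + b * G2 x).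
Proof. by move=> h1 h2; apply: (L2_lin _ _ _ _ _ h1 h2). Qed.

Lemma inH_L2 j h : inH P X j h -> L2 P (fun w => h (X j w)).
Proof.
case=> mh [H _]; apply/L2P; split => //.
exact: measurableT_comp.
Qed.

Lemma inH_lin j h1 h2 a b : inH P X j h1 -> inH P X j h2 ->
  inH P X j (fun x => a * h1 x + b * h2 x).
Proof.
move=> H1 H2.
have L1 := inH_L2 _ _ H1; have L2' := inH_L2 _ _ H2.
have L := L2_lin _ _ _ a b L1 L2'.
case: H1 => m1 [_ c1]; case: H2 => m2 [_ c2].
split.
  by apply: measurable_funD; apply: measurable_funM.
split; first by case/(L2P _): L.
move=> hj.
have c1' : \int[P]_w h1 (X j w) = 0 := c1 hj.
have c2' : \int[P]_w h2 (X j w) = 0 := c2 hj.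
change (\int[P]_w (a * h1 (X j w) + b * h2 (X j w)) = 0).
have I1 := L2_int _ _ L1; have I2 := L2_int _ _ L2'.
rewrite RintegralD //; try by apply: (int_scale _).
by rewrite !RintegralZl // c1' c2' !mulr0 addr0.
Qed.

Lemma L2_zero : L2 P (fun _ : Omega => 0).
Proof.
split; first exact: measurable_cst.
apply: (eq_integrable _ _ _ _ (finite_measure_integrable_cst P 0 measurableT)) => //= x _.
by rewrite mulr0.
Qed.

Lemma L2_sum (I : Type) (s : seq I) (Pr : pred I) (F : I -> Omega -> R) :
  (forall i, Pr i -> L2 P (F i)) -> L2 P (fun w => \sum_(i <- s | Pr i) F i w).
Proof.
move=> HF; elim: s => [|i s IH].
  by under eq_fun do rewrite big_nil; exact: L2_zero.
under eq_fun do rewrite big_cons.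
case: (boolP (Pr i)) => Pi.
  have := L2_lin _ _ _ 1 1 (HF i Pi) IH.
  by under eq_fun do rewrite !mul1r.
exact: IH.
Qed.

Lemma SIG_lift j h : inH P X j h -> SIG (liftj j h).
Proof. exact: inH_L2. Qed.

Lemma SIG_fsum (h : 'I_q -> R -> R) (J : {set 'I_q}) :
  (forall j, j \in J -> inH P X j (h j)) -> SIG (fsum h J).
Proof.
move=> H; rewrite /SIG /fsum.
by apply: L2_sum => j jJ; apply: inH_L2; apply: H.
Qed.

Lemma SIG_inHJ J G : inHJ P X J G -> SIG G.
Proof. by case=> h [H ->]; apply: SIG_fsum. Qed.

Lemma inHJ_N J G : inHJ P X J G -> inHJ P X J (fun x => - G x).
Proof.
case=> h [H ->]; exists (fun j x => 0 * h j x + (-1) * h j x); split.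
  by move=> j jJ; apply: inH_lin; apply: H.
apply: funext => x; rewrite /fsum -sumrN; apply: eq_bigr => j _; ring.
Qed.

Lemma ip_le_nrm G1 G2 : SIG G1 -> SIG G2 -> 0 < sqn P X G1 -> 0 < sqn P X G2 ->
  ipX P X G1 G2 <= nrm P X G1 * nrm P X G2.
Proof.
move=> S1 S2 p1 p2; have := CS_G _ _ S1 S2.
rewrite /nrm.
have e1 := sqr_sqrtr (ltW p1); have e2 := sqr_sqrtr (ltW p2).
have n1 : 0 < Num.sqrt (sqn P X G1) by rewrite sqrtr_gt0.
have n2 : 0 < Num.sqrt (sqn P X G2) by rewrite sqrtr_gt0.
move: e1 e2 n1 n2.
set a := Num.sqrt _; set b := Num.sqrt _ => e1 e2 n1 n2.
rewrite -e1 -e2 => h.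
have ab : 0 < a * b by rewrite mulr_gt0.
case: (lerP (ipX P X G1 G2) (a * b)) => // hh.
have : (a * b) ^+ 2 < ipX P X G1 G2 ^+ 2.
  by rewrite !expr2; nra.
by rewrite exprMn => /(le_lt_trans h); rewrite ltxx.
Qed.

Lemma corr_ub qs : has_ubound (corr_set P X qs).
Proof.
exists 1 => r [J1 [J2 [_ [_ [_ [G1 [G2 [h1 [h2 [p1 [p2 ->]]]]]]]]]]].
have S1 := SIG_inHJ _ _ h1; have S2 := SIG_inHJ _ _ h2.
have n : 0 < nrm P X G1 * nrm P X G2 by rewrite mulr_gt0 // sqrtr_gt0.
by rewrite ler_pdivrMr // mul1r; apply: ip_le_nrm.
Qed.

Lemma rho_lb qs (J1 J2 : {set 'I_q}) A B : [disjoint J1 & J2] ->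
  (#|J1| <= qs)%N -> (#|J2| <= qs)%N -> inHJ P X J1 A -> inHJ P X J2 B ->
  (1 - rho P X qs ^+ 2) * sqn P X A <= sqn P X (fun x => A x - B x).
Proof.
move=> dJ c1 c2 hA hB.
have SA := SIG_inHJ _ _ hA; have SB := SIG_inHJ _ _ hB.
have -> : (fun x => A x - B x) = (fun x => 1 * A x + (-1) * B x).
  by apply: funext => x; ring.
rewrite sqn_comb //.
have sA0 := sqn_ge0 A; have sB0 := sqn_ge0 B.
have CS := CS_G _ _ SA SB.
set ip := ipX P X A B in CS *.
set rr := rho P X qs.
have rr2 : 0 <= rr ^+ 2 by rewrite sqr_ge0.
have ip0 : sqn P X A * sqn P X B = 0 -> ip = 0.
  move=> e; rewrite e in CS.
  have : ip ^+ 2 = 0 by apply/eqP; rewrite eq_le CS sqr_ge0.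
  by move/eqP; rewrite sqrf_eq0 => /eqP.
case: (eqVneq (sqn P X A) 0) => [eA|nA].
  by rewrite ip0 ?eA ?mul0r //; nra.
case: (eqVneq (sqn P X B) 0) => [eB|nB].
  by rewrite ip0 ?eB ?mulr0 //; nra.
have pA : 0 < sqn P X A by rewrite lt_def nA sA0.
have pB : 0 < sqn P X B by rewrite lt_def nB sB0.
have n : 0 < nrm P X A * nrm P X B by rewrite mulr_gt0 // sqrtr_gt0.
have mem : corr_set P X qs (ip / (nrm P X A * nrm P X B)).
  by exists J1, J2; do 3 (split => //); exists A, B.
have := ub_le_sup (corr_ub qs) mem; rewrite -/rr ler_pdivrMr // => hip.
have eA := sqr_sqrtr sA0; have eB := sqr_sqrtr sB0.
move: hip n; rewrite /nrm.
move: eA eB; set a := Num.sqrt _; set b := Num.sqrt _ => eA eB hip n.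
rewrite -eA -eB.
have hip2 : ip <= rr * (a * b) := hip.
have := sqr_ge0 (b - rr * a); rewrite !expr2 => hh; nra.
Qed.

Lemma inV_lin j mm g1 g2 a b : inV P X j mm g1 -> inV P X j mm g2 ->
  inV P X j mm (fun x => a * g1 x + b * g2 x).
Proof.
move=> [H1 [a1 e1]] [H2 [a2 e2]]; split; first exact: inH_lin.
exists (fun k => a * a1 k + b * a2 k) => x.
rewrite e1 e2 !mulr_sumr -big_split /=; apply: eq_bigr => k _; ring.
Qed.

Lemma inH_zero j h : inH P X j h -> inH P X j (fun _ => 0).
Proof.
move=> H; have := inH_lin _ _ _ 0 0 H H.
suff -> : (fun x => 0 * h x + 0 * h x) = (fun _ => 0) by [].
by apply: funext => x; rewrite !mul0r addr0.
Qed.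

Lemma inV_zero j mm h : inH P X j h -> inV P X j mm (fun _ => 0).
Proof.
move=> H; split; first exact: inH_zero H.
by exists (fun _ => 0) => x; rewrite big1 // => k _; rewrite mul0r.
Qed.

End Model2.

Lemma sum_if (R : realType) (I : finType) (S A : {set I}) (F : I -> R) :
  \sum_(j in S) (if j \in A then F j else 0) = \sum_(j in S :&: A) F j.
Proof.
rewrite -big_mkcondr /=; apply: eq_bigl => j; by rewrite inE.
Qed.

Lemma inf_ge0 (R : realType) (E : set R) : (forall x, E x -> 0 <= x) -> 0 <= inf E.
Proof.
move=> H; have [->|/set0P [x Ex]] := eqVneq E set0; first by rewrite inf0.
apply: lb_le_inf; first by exists x.
by move=> y Ey; apply: H.
Qed.

Section Vec.
Variables (R : realType) (n : nat).

Lemma vsqn_pyth S (y u : 'I_n -> R) : is_eproj S y u ->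
  vsqn y = vsqn u + vsqn (fun i => y i - u i).
Proof.
case=> Su /(_ u Su) o; rewrite /vsqn -mulrDr; congr (_ * _).
rewrite -big_split /=.
have -> : \sum_(i < n) y i ^+ 2 = \sum_(i < n) (u i ^+ 2 + (y i - u i) ^+ 2 + 2 * ((y i - u i) * u i)).
  by apply: eq_bigr => i _; ring.
by rewrite big_split /= -mulr_sumr o mulr0 addr0.
Qed.

Lemma vsqn_min S (y u v : 'I_n -> R) : is_eproj S y u -> S v ->
  vsqn (fun i => y i - u i) <= vsqn (fun i => y i - v i).
Proof.
case=> Su o Sv; rewrite /vsqn ler_wpM2l ?invr_ge0 //.
have -> : \sum_(i < n) (y i - v i) ^+ 2 = \sum_(i < n) ((y i - u i) ^+ 2 + (u i - v i) ^+ 2 + 2 * ((y i - u i) * u i) - 2 * ((y i - u i) * v i)).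
  by apply: eq_bigr => i _; ring.
rewrite sumrB big_split big_split /= -!mulr_sumr (o u Su) (o v Sv) !mulr0 subr0 addr0.
by rewrite lerDl sumr_ge0 // => i _; rewrite sqr_ge0.
Qed.

Lemma vsqn_tri (a b : 'I_n -> R) :
  2 / 3 * vsqn a - 2 * vsqn b <= vsqn (fun i => a i + b i).
Proof.
rewrite /vsqn !mulrA -![_ * n%:R^-1]mulrC -!mulrA -mulrBr ler_wpM2l ?invr_ge0 //.
rewrite !mulr_sumr -sumrB; apply: ler_sum => i _.
have := sqr_ge0 (a i / 3 + b i); rewrite !expr2 => h; nra.
Qed.

End Vec.

Lemma sq_le (R : realType) (x y : R) : 0 <= y -> x ^+ 2 <= y ^+ 2 -> x <= y.
Proof.
move=> y0 h; case: (lerP x y) => // yx; exfalso.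
move: h; rewrite !expr2 => h; nra.
Qed.
Theorem proposition6 (R : realType) (d : measure_display) (Omega : measurableType d)
  (P : probability Omega R) (q : nat) (X : 'I_q -> Omega -> R)
  (f : 'I_q -> R -> R) (qs : nat) (eps' : R)
  (c : R) (p : 'I_q -> R -> R) (alpha K C : 'I_q -> R) (m : 'I_q -> nat)
  (c' delta : R) (J : {set 'I_q})
  (n : nat) (xs : 'I_n -> 'I_q -> R) (g : 'I_q -> R -> R) :
  (* the model *)
  (0 < q)%N ->
  (forall j, measurable_fun [set: Omega]%classic (X j)) ->
  (forall j, inH P X j (f j)) ->
  (#|J0 P X f| <= qs)%N ->
  (* Assumption 1 *)
  rho P X qs < 1 ->
  (* epsilon'_{q*} *)
  0 < eps' ->
  (forall (J' : {set 'I_q}) (h : 'I_q -> R -> R), (#|J'| <= qs)%N ->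
     (forall j, j \in J' -> inH P X j (h j)) ->
     sqn P X (fsum h J') <= (1 + eps') * \sum_(j in J') sqn P X (liftj j (h j))) ->
  (* Assumption 2 *)
  0 < c ->
  (forall j w, 0 <= X j w <= 1) ->
  (forall j, measurable_fun [set: R]%classic (p j)) ->
  (forall j (x : R), 0 <= x <= 1 -> c <= p j x <= 1 / c) ->
  (forall j (A : set R), measurable A ->
     P (X j @^-1` A)%classic =
     (\int[lebesgue_measure]_(x in (A `&` I01)%classic) (p j x)%:E)%E) ->
  (forall j, 1 / 2 < alpha j) ->
  (forall j, 0 < K j) ->
  (forall j, Wtilde (alpha j) (K j) (f j)) ->
  (* the approximation constants C_j *)
  (forall j, 0 < C j) ->
  (forall j (mm : nat) (h gg : R -> R), (1 <= mm)%N ->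
     Wtilde (alpha j) (K j) h -> inH P X j h -> is_projV P X j mm h gg ->
     sqn P X (liftj j (fun x => h x - gg x))
       <= C j * K j ^+ 2 * (mm%:R) `^ (- (2 * alpha j)) /\
     (forall x : R, 0 <= x <= 1 ->
        (h x - gg x) ^+ 2 <= C j * K j ^+ 2 * (mm%:R) `^ (1 - 2 * alpha j))) ->
  (* the remaining hypotheses *)
  J0 P X f != finset.set0 ->
  0 < delta < 1 ->
  0 < c' < 1 ->
  (forall j, (m j)%:R >=
     (C j * K j ^+ 2 * qs%:R * (1 + eps')
        / (c' * (1 - rho P X qs ^+ 2) * kappa P X f)) `^ (1 / (2 * alpha j))) ->
  2 / 3 * (1 - Num.sqrt c') ^+ 2 - 8 * ((1 + delta) / (1 - delta) ^+ 2) * c' >= 1 / 2 ->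
  (#|J| <= qs)%N ->
  J0 P X f :\: J != finset.set0 ->
  (* the sample and the event E_{delta, J u J0} /\ A *)
  (0 < n)%N ->
  (forall i j, 0 <= xs i j <= 1) ->
  eventE P X xs delta m (J :|: J0 P X f) ->
  (forall j, j \in J0 P X f -> is_projV P X j (m j) (f j) (g j)) ->
  esqn xs (fun x => fsum f [set: 'I_q]%SET x - fsum g (J0 P X f) x)
    <= 2 * c' * (1 - rho P X qs ^+ 2) * kappa P X f ->
  (* conclusion *)
  forall u0 u : 'I_n -> R,
    is_eproj (SJ P X xs m (J0 P X f)) (fun i => fsum f [set: 'I_q]%SET (xs i)) u0 ->
    is_eproj (SJ P X xs m J) (fun i => fsum f [set: 'I_q]%SET (xs i)) u ->
    vsqn u0 - vsqn u >=
      1 / 2 * ((1 - delta) ^+ 2 / (1 + delta)) * (1 - rho P X qs ^+ 2)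
        * kappa_l P X f #|J0 P X f :\: J|.
Proof.
move=> q0 mX Hf HJ0qs Hrho eps0 Heps c0 HX01 mp Hp HPX Halpha HK HW HC HCj
  HJ0n Hdelta Hc' Hm HCond HJqs HJ0J n0 Hxs HE Hproj HA u0 u Hu0 Hu.
set (J0s := J0 P X f) in *.
set (rr := rho P X qs) in *.
set (kap := kappa P X f) in *.
set kl := kappa_l P X f #|J0s :\: J|.
set (F := fsum f [set: 'I_q]%SET) in *.
set (y := fun i => F (xs i)) in *.
case/andP: Hdelta => d0 d1; case/andP: Hc' => c'0 c'1.
have kap0 : 0 <= kap.
  apply: inf_ge0 => x [J' _ <-]; exact: sqn_ge0.
have kl0 : 0 <= kl.
  apply: inf_ge0 => x [J' _ <-]; exact: sqn_ge0.
case: (Hu) => [[H [[hh [Hhh eH]] uH]] _].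
set Gs := fsum g J0s.
set w := fun i => Gs (xs i).
have Sw : SJ P X xs m J0s w.
  exists Gs; split => //; exists g; split => // j jJ; exact: (Hproj j jJ).1.
have Epy : vsqn u0 - vsqn u = vsqn (fun i => y i - u i) - vsqn (fun i => y i - u0 i).
  have := vsqn_pyth _ _ _ _ _ Hu0; have := vsqn_pyth _ _ _ _ _ Hu; lra.
have Ew : vsqn (fun i => y i - u0 i) <= 2 * c' * (1 - rr ^+ 2) * kap.
  exact: le_trans (vsqn_min _ _ _ _ _ _ Hu0 Sw) HA.
rewrite Epy.
have vs0 : 0 <= vsqn (fun i => y i - u i).
  by rewrite /vsqn mulr_ge0 ?invr_ge0 // sumr_ge0 // => i _; rewrite sqr_ge0.
have k0 : 0 <= (1 - delta) ^+ 2 / (1 + delta) by rewrite divr_ge0 ?sqr_ge0 // ?addr_ge0 // ltW.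
case: (lerP (1 - rr ^+ 2) 0) => hr.
  have : 2 * c' * (1 - rr ^+ 2) * kap <= 0.
    by rewrite -mulrA mulr_ge0_le0 ?mulr_ge0 ?mulr_le0_ge0 // ltW.
  have : 1 / 2 * ((1 - delta) ^+ 2 / (1 + delta)) * (1 - rr ^+ 2) * kl <= 0.
    by rewrite mulr_le0_ge0 // mulr_ge0_le0 // mulr_ge0 // divr_ge0.
  lra.
have qs0 : (0 < qs)%N by apply: leq_trans HJ0qs; rewrite card_gt0.
have qsr : 0 < qs%:R :> R by rewrite ltr0n.
have fsum_pos : forall J' : {set 'I_q}, J' \subset J0s -> J' != finset.set0 -> 0 < sqn P X (fsum f J').
  move=> J' sJ' /set0Pn [j jJ'].
  have jJ0 : j \in J0s := (fintype.subsetP sJ') j jJ'.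
  have pj : 0 < sqn P X (liftj j (f j)) by move: jJ0; rewrite /J0s /J0 inE.
  have e1 : fsum f [set j] = liftj j (f j) by apply: funext => x; rewrite /fsum big_set1.
  have e : fsum f J' = (fun x => fsum f [set j] x - (fun x => - fsum f (J' :\ j) x) x).
    by apply: funext => x; rewrite /fsum (big_setD1 _ jJ') big_set1 opprK.
  have hA : inHJ P X [set j] (fsum f [set j]) by exists f; split => // i _; exact: Hf.
  have hB : inHJ P X (J' :\ j) (fun x => - fsum f (J' :\ j) x).
    by apply: inHJ_N => //; exists f; split => // i _; exact: Hf.
  have c1 : (#|[set j]| <= qs)%N by rewrite cards1.
  have c2 : (#|J' :\ j| <= qs)%N.
    apply: leq_trans (subset_leq_card (subD1set J' j)) _.
    exact: leq_trans (subset_leq_card sJ') HJ0qs.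
  have dj : [disjoint [set j] & J' :\ j] by rewrite disjoints1 setD11.
  have := rho_lb P q X mX qs [set j] (J' :\ j) _ _ dj c1 c2 hA hB.
  rewrite -e e1 => h; apply: lt_le_trans h; exact: mulr_gt0.
have kapp : 0 < kap.
  pose mu := \big[Num.min/1]_(J' : {set 'I_q} | (J' \subset J0s) && (J' != finset.set0))
     sqn P X (fsum f J').
  have mu0 : 0 < mu.
    by apply: lt_bigmin => // J' /andP [a b]; exact: fsum_pos.
  apply: lt_le_trans mu0 _; apply: lb_le_inf.
    by exists (sqn P X (fsum f J0s)); exists J0s.
  move=> x [J' [a b] <-]; apply: bigmin_le_cond; rewrite a b.
  done.
have bnd : forall j, j \in J0s -> sqn P X (liftj j (fun x => f j x - g j x)) <=
    c' * (1 - rr ^+ 2) * kap / (qs%:R * (1 + eps')).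
  move=> j jJ.
  have hm := Hm j.
  set base := C j * K j ^+ 2 * qs%:R * (1 + eps') / (c' * (1 - rr ^+ 2) * kap) in hm.
  have CK0 : 0 < C j * K j ^+ 2 by rewrite mulr_gt0 ?HC // exprn_gt0 ?HK.
  have b0 : 0 < base.
    rewrite /base divr_gt0 // ?mulr_gt0 // ?addr_gt0 //.
  set e := 2 * alpha j.
  have e0 : 0 < e by rewrite /e; have := Halpha j; lra.
  have mpos : 0 < (m j)%:R :> R := lt_le_trans (powR_gt0 _ b0) hm.
  have mj : (0 < m j)%N by rewrite -(ltr0n R).
  have pw : base <= (m j)%:R `^ e.
    have := @ge0_ler_powR R e (ltW e0) (base `^ (1 / e)) ((m j)%:R).
    rewrite !nnegrE powR_ge0 ltW // => /(_ isT isT hm).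
    by rewrite -powRrM mul1r mulVf ?gt_eqF // powRr1 // ltW.
  have pw' : (m j)%:R `^ (- e) <= base^-1.
    by rewrite powRN lef_pV2 // posrE powR_gt0.
  have := (HCj j (m j) (f j) (g j) mj (HW j) (Hf j) (Hproj j jJ)).1.
  move/le_trans; apply.
  apply: le_trans (ler_wpM2l (ltW CK0) pw') _.
  rewrite le_eqVlt; apply/orP; left; apply/eqP.
  rewrite /base; field.
  by rewrite !gt_eqF // ?mulr_gt0 // ?addr_gt0 // ?HC // exprn_gt0 ?HK.
set J1 := J0s :\: J.
have J1qs : (#|J1| <= qs)%N := leq_trans (subset_leq_card (subsetDl _ _)) HJ0qs.
have J1J0 : forall j, j \in J1 -> j \in J0s by move=> j; rewrite /J1 inE => /andP[].
pose hd := fun j x => f j x - g j x.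
have inHd : forall j, j \in J1 -> inH P X j (hd j).
  move=> j jJ1.
  have := inH_lin P q X mX j (f j) (g j) 1 (-1) (Hf j) (Hproj j (J1J0 j jJ1)).1.1.
  suff -> : (fun x => 1 * f j x + -1 * g j x) = hd j by [].
  by apply: funext => x; rewrite /hd; ring.
pose E := fsum hd J1.
have Eb : sqn P X E <= c' * kap.
  apply: le_trans (Heps J1 hd J1qs inHd) _.
  have : \sum_(j in J1) sqn P X (liftj j (hd j)) <=
      \sum_(j in J1) (c' * (1 - rr ^+ 2) * kap / (qs%:R * (1 + eps'))).
    by apply: ler_sum => j jJ1; apply: bnd; apply: J1J0.
  rewrite sumr_const -[_ *+ #|J1|]mulr_natl => hs.
  apply: le_trans (ler_wpM2l _ hs) _; first by rewrite addr_ge0 // ltW.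
  have k1 : (#|J1|%:R : R) <= qs%:R by rewrite ler_nat.
  have -> : (1 + eps') * (#|J1|%:R * (c' * (1 - rr ^+ 2) * kap / (qs%:R * (1 + eps'))))
      = c' * kap * ((1 - rr ^+ 2) * (#|J1|%:R / qs%:R)).
    by field; rewrite !gt_eqF // addr_gt0.
  apply: ler_piMr; first by rewrite mulr_ge0 // ltW.
  have : #|J1|%:R / qs%:R <= 1 :> R by rewrite ler_pdivrMr // mul1r.
  have : 0 <= #|J1|%:R / qs%:R :> R by rewrite divr_ge0 // ltW.
  have : 0 <= rr ^+ 2 by rewrite sqr_ge0.
  nra.
pose Fl := fsum f J1.
have hlb : forall l, has_lbound [set sqn P X (fsum f J') | J' in
   [set J' : {set 'I_q} | J' \subset J0 P X f /\ #|J'| = l]]%classic.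
  by move=> l; exists 0 => x [J' _ <-]; exact: sqn_ge0.
have hlb0 : has_lbound [set sqn P X (fsum f J') | J' in
   [set J' : {set 'I_q} | J' \subset J0 P X f /\ J' != finset.set0]]%classic.
  by exists 0 => x [J' _ <-]; exact: sqn_ge0.
have klFl : kl <= sqn P X Fl.
  apply: (ge_inf (hlb _)).
  by exists J1 => //; split => //; apply: subsetDl.
have kapkl : kap <= kl.
  apply: lb_le_inf; first by exists (sqn P X Fl); exists J1 => //; split => //; apply: subsetDl.
  move=> x [J' [s1 s2] <-]; apply: (ge_inf hlb0).
  by exists J'; split => //; rewrite -card_gt0 s2 card_gt0.
pose A := fsum g J1.
have inHg : forall j, j \in J1 -> inH P X j (g j).
  by move=> j jJ1; exact: (Hproj j (J1J0 j jJ1)).1.1.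
have SA : SIG P q X A by apply: SIG_fsum.
have SE : SIG P q X E by apply: SIG_fsum.
have eFl : Fl = (fun x => 1 * A x + 1 * E x).
  apply: funext => x; rewrite /Fl /A /E /fsum !mul1r -big_split /=.
  by apply: eq_bigr => j _; rewrite /hd; ring.
have sAb : (1 - Num.sqrt c') ^+ 2 * kl <= sqn P X A.
  have h1 := sqn_comb P q X A E 1 1 SA SE; rewrite -eFl in h1.
  have h2 := CS_G P q X A E SA SE.
  have sA0 := sqn_ge0 P q X A; have sE0 := sqn_ge0 P q X E.
  have eA := sqr_sqrtr sA0; have eE := sqr_sqrtr sE0.
  have ek := sqr_sqrtr kl0; have ec := sqr_sqrtr (ltW c'0).
  have a0 := sqrtr_ge0 (sqn P X A); have e0 := sqrtr_ge0 (sqn P X E).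
  have k0' := sqrtr_ge0 kl; have s0 := sqrtr_ge0 c'.
  move: h1 h2 eA eE ek ec a0 e0 k0' s0.
  set a := Num.sqrt (sqn P X A); set ee := Num.sqrt (sqn P X E).
  set k := Num.sqrt kl; set s := Num.sqrt c'.
  set ip := ipX P X A E.
  move=> h1 h2 eA eE ek ec a0 e0 k0' s0.
  have hip : ip <= a * ee.
    apply: sq_le; first exact: mulr_ge0.
    by rewrite exprMn eA eE.
  have hk : k <= a + ee.
    apply: sq_le; first exact: addr_ge0.
    rewrite ek; apply: le_trans klFl _; rewrite h1 -eA -eE; nra.
  have he : ee <= s * k.
    apply: sq_le; first exact: mulr_ge0.
    rewrite exprMn ec ek eE; apply: le_trans Eb _.
    by apply: ler_wpM2l => //; exact: ltW.
  have s1 : s < 1.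
    have : s ^+ 2 < 1 by rewrite ec.
    rewrite expr2 => h; nra.
  have ha : (1 - s) * k <= a by nra.
  have h0 : 0 <= (1 - s) * k by rewrite mulr_ge0 // subr_ge0 ltW.
  rewrite -eA -ek -exprMn !expr2; nra.
pose gJ j := if j \in J0s then g j else (fun _ : R => 0).
pose hJ j := if j \in J then hh j else (fun _ : R => 0).
have VgJ : forall j, inV P X j (m j) (gJ j).
  move=> j; rewrite /gJ; case: ifP => jj; first exact: (Hproj j jj).1.
  exact: (inV_zero P q X mX j (m j) (f j) (Hf j)).
have VhJ : forall j, inV P X j (m j) (hJ j).
  move=> j; rewrite /hJ; case: ifP => jj; first exact: Hhh.
  exact: (inV_zero P q X mX j (m j) (f j) (Hf j)).
have gJE : forall (S : {set 'I_q}) (x : 'I_q -> R), \sum_(j in S) gJ j (x j) = \sum_(j in S :&: J0s) g j (x j).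
  move=> S x; rewrite -sum_if; apply: eq_bigr => j _; rewrite /gJ; by case: ifP.
have hJE : forall (S : {set 'I_q}) (x : 'I_q -> R), \sum_(j in S) hJ j (x j) = \sum_(j in S :&: J) hh j (x j).
  move=> S x; rewrite -sum_if; apply: eq_bigr => j _; rewrite /hJ; by case: ifP.
pose k := fun j x => 1 * gJ j x + (-1) * hJ j x.
pose D := fun x => Gs x - H x.
have VD : inVJ P X m (J :|: J0s) D.
  exists k; split; first by move=> j _; apply: inV_lin.
  apply: funext => x; rewrite /D /Gs eH /fsum /k big_split /= -!mulr_sumr !mul1r mulN1r.
  rewrite gJE hJE; congr (_ - _); apply: eq_bigl => j; rewrite finset.in_setI finset.in_setU.
    by case: (j \in J0s); rewrite ?andbT ?andbF ?orbT.
  by case: (j \in J); rewrite ?andbT ?andbF.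
have [HE1 _] := HE D VD.
pose bb := fun j x => 1 * hh j x + (-1) * gJ j x.
have HB : inHJ P X J (fsum bb J).
  exists bb; split => // j jJ; apply: inH_lin => //; [exact: (Hhh j jJ).1 | exact: (VgJ j).1].
have HAJ : inHJ P X J1 A by exists g.
have eD : D = (fun x => A x - fsum bb J x).
  apply: funext => x; rewrite /D /Gs /A eH /fsum.
  rewrite (@big_setID _ _ _ _ J0s J) /= /bb big_split /= -!mulr_sumr !mul1r mulN1r gJE finset.setIC.
  rewrite -/J1; lra.
have dJ : [disjoint J1 & J].
  rewrite disjoint_subset; apply/fintype.subsetP => j; rewrite /J1 !inE.
  by case/andP.
have rD := rho_lb P q X mX qs J1 J A (fsum bb J) dJ J1qs HJqs HAJ HB.
rewrite -eD in rD.
have eDw : esqn xs D = vsqn (fun i => w i - u i).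
  by rewrite /esqn /vsqn; congr (_ * _); apply: eq_bigr => i _; rewrite uH.
have tri := vsqn_tri R n (fun i => w i - u i) (fun i => y i - w i).
have eyu : (fun i => w i - u i + (y i - w i)) = (fun i => y i - u i).
  by apply: funext => i; ring.
rewrite eyu in tri.
have Hyw : vsqn (fun i => y i - w i) <= 2 * c' * (1 - rr ^+ 2) * kap := HA.
rewrite eDw in HE1.
set t := (1 - Num.sqrt c') ^+ 2 in sAb HCond.
have t0 : 0 <= t by rewrite sqr_ge0.
set Q := (1 - rr ^+ 2) * kl.
have Q0 : 0 <= Q by rewrite mulr_ge0 // ltW.
have X1 : (1 - rr ^+ 2) * (t * kl) <= sqn P X D.
  by apply: le_trans rD; apply: ler_wpM2l => //; exact: ltW.
have X2 : (1 - delta) * ((1 - rr ^+ 2) * (t * kl)) <= vsqn (fun i => w i - u i).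
  by apply: le_trans HE1; apply: ler_wpM2l => //; rewrite subr_ge0 ltW.
have X3 : c' * (1 - rr ^+ 2) * kap <= c' * Q.
  by rewrite /Q mulrA; apply: ler_wpM2l => //; rewrite mulr_ge0 // ltW.
set kk := (1 - delta) ^+ 2 / (1 + delta) in k0 *.
set r := (1 + delta) / (1 - delta) ^+ 2 in HCond.
have kr : kk * r = 1.
  rewrite /kk /r; field; apply/andP; split; rewrite gt_eqF //; lra.
have k1 : kk <= 1 - delta.
  rewrite /kk ler_pdivrMr ?addr_gt0 // expr2; nra.
have main : 1 / 2 * kk <= 2 / 3 * t * kk - 8 * c'.
  have := ler_wpM2l k0 HCond.
  have -> : kk * (2 / 3 * t - 8 * r * c') = 2 / 3 * t * kk - 8 * c' * (kk * r) by ring.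
  by rewrite kr mulr1 mulrC.
have main' : 1 / 2 * kk <= 2 / 3 * t * (1 - delta) - 6 * c'.
  have : t * kk <= t * (1 - delta) by apply: ler_wpM2l.
  nra.
have fin : 1 / 2 * kk * Q <= (2 / 3 * t * (1 - delta) - 6 * c') * Q.
  by apply: ler_wpM2r.
have -> : 1 / 2 * kk * (1 - rr ^+ 2) * kl = 1 / 2 * kk * Q by rewrite /Q; ring.
apply: le_trans fin _.
have -> : (2 / 3 * t * (1 - delta) - 6 * c') * Q =
  2 / 3 * ((1 - delta) * ((1 - rr ^+ 2) * (t * kl))) - 6 * (c' * Q) by rewrite /Q; ring.
have : 2 * c' * (1 - rr ^+ 2) * kap = 2 * (c' * (1 - rr ^+ 2) * kap) by ring.
lra.
Qed.
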